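(* In the setting described in the context, suppose $n\in\mathbb{N}$, $\omega,\upsilon\in\mathcal{P}_n$, $y\in T^n\omega\cap T^n\upsilon$, and $\mathcal{D}^n(\ell_\omega y)\mathcal{K}\pitchfork\mathcal{D}^n(\ell_\upsilon y)\mathcal{K}$. Then there exists a $1$-dimensional linear subspace $L\subset\mathbb{R}^d$ such that for all $v\in L\setminus\{0\}$, \[ |D(\tau_n\circ\ell_\omega)(y)v-D(\tau_n\circ\ell_\upsilon)(y)v|>C_5\big(|D\ell_\omega(y)v|+|D\ell_\upsilon(y)v|\big). \]
   Context: $X$ is a compact open subset of $\mathbb{R}^d$ (as in the paper). $T:X\to X$: finite partition $\mathcal{P}$ of a full-measure subset into connected open sets, $T|_\omega$ a $\mathcal{C}^1$ diffeomorphism onto $T\omega$ for $\omega\in\mathcal{P}$; $\|(DT^n(x))^{-1}\|\le e^{-\lambda n}$ (some $\lambda>0$). $\tau:X\to(0,\infty)$ is $\mathcal{C}^{1+\alpha}$ with $\|D\tau(x)(DT(x))^{-1}\|\le C_3$ for $x\in\omega\in\mathcal{P}$; $C_5=2C_3/(1-e^{-\lambda})$. $\mathcal{P}_n$ is the $n$-th refinement of $\mathcal{P}$; for $\omega\in\mathcal{P}_n$, $\ell_\omega=(T^n|_\omega)^{-1}:T^n\omega\to\omega$. $\tau_n=\sum_{j=0}^{n-1}\tau\circ T^j$. $\mathcal{D}^n(x)=\begin{pmatrix}DT^n(x)&0\\ D\tau_n(x)&1\end{pmatrix}$ acting on $\mathbb{R}^{d+1}$; $\mathcal{K}=\{(a,b):a\in\mathbb{R}^d,b\in\mathbb{R},|b|\le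 C_5|a|\}$. For $x_1,x_2$ with $T^nx_1=T^nx_2$, $\mathcal{D}^n(x_1)\mathcal{K}\pitchfork\mathcal{D}^n(x_2)\mathcal{K}$ means that $\mathcal{D}^n(x_1)\mathcal{K}\cap\mathcal{D}^n(x_2)\mathcal{K}$ contains no $d$-dimensional linear subspace. *)

(* Defs.v *)
From HB Require Import structures.
From mathcomp Require Import all_boot all_order all_algebra.
From mathcomp Require Import all_classical all_reals all_analysis.
Set Implicit Arguments. Unset Strict Implicit. Unset Printing Implicit Defensive.
Import Order.TTheory GRing.Theory Num.Theory.
Import numFieldNormedType.Exports.
Local Open Scope classical_set_scope.
Local Open Scope ring_scope.

Section Defs.
Variables (R : realType) (d : nat).
Notation V := 'rV[R]_d.

Definition enorm (v : V) : R := Num.sqrt (\sum_(i < d) v 0 i ^+ 2).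

(* Jacobian matrix of f at x in the row-vector convention: v *m jac f x = Df(x) v. *)
Definition jac (f : V -> V) (x : V) : 'M[R]_d := lin1_mx ('d f x).

Definition box (a b : V) : set V := [set x | forall i, a 0 i <= x 0 i <= b 0 i].
Definition boxvol (a b : V) : R := \prod_(i < d) (b 0 i - a 0 i).
Definition lebesgue_null (A : set V) : Prop :=
  forall eps : R, 0 < eps -> exists a b : nat -> V,
    (forall k i, a k 0 i <= b k 0 i) /\
    A `<=` \bigcup_k box (a k) (b k) /\
    forall N, \sum_(k < N) boxvol (a k) (b k) <= eps.

(* C^1 on a set U: differentiable at each point of U, derivative continuous on U
   (continuity of each directional derivative x |-> Df(x) v, i.e. continuity of Df
   in the (finite-dimensional) operator topology). *)
Definition C1on (W : normedModType R) (U : set V) (f : V -> W) : Prop :=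
  (forall x, U x -> differentiable f x) /\
  (forall v x, U x -> {for x, continuous (fun z => 'd f z v)}).

(* The n-th refinement of the partition: the element of P_n with itinerary w. *)
Definition cyl (I : finType) (P : I -> set V) (T : V -> V) (n : nat)
  (w : 'I_n -> I) : set V :=
  [set x | forall j : 'I_n, P (w j) (iter j T x)].

Definition birk (T : V -> V) (tau : V -> R) (n : nat) (x : V) : R :=
  \sum_(j < n) tau (iter j T x).

(* The matrix D^n(x) = [[DT^n(x), 0], [Dtau_n(x), 1]] acting on
   R^{d+1} = R^d x R, written as the map (a, b) |-> (DT^n(x) a, Dtau_n(x) a + b). *)
Definition Dn (T : V -> V) (tau : V -> R) (n : nat) (x : V)
  (w : 'rV[R]_(d + 1)) : 'rV[R]_(d + 1) :=
  row_mx ('d (iter n T) x (lsubmx w))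
         (('d (birk T tau n) x (lsubmx w) + rsubmx w 0 0)%:M).

Definition cone (C5 : R) : set 'rV[R]_(d + 1) :=
  [set w | `|rsubmx w 0 0| <= C5 * enorm (lsubmx w)].

Definition transverse (T : V -> V) (tau : V -> R) (n : nat) (C5 : R)
  (x1 x2 : V) : Prop :=
  ~ exists S : {vspace 'rV[R]_(d + 1)}, (\dim S = d)%N /\
      forall w, w \in S ->
        (Dn T tau n x1 @` cone C5) w /\ (Dn T tau n x2 @` cone C5) w.

Definition setting (X : set V) (T : V -> V) (tau : V -> R) (lam alpha C3 : R)
  (I : finType) (P : I -> set V) : Prop :=
  [/\ compact X /\ (forall x, X x -> X (T x)),
      [/\ (forall i, open (P i) /\ connected (P i) /\ P i `<=` X),
          (forall i j, i != j -> P i `&` P j = set0)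
        & lebesgue_null (X `\` \bigcup_(i in [set: I]) P i)],
      (forall i, [/\ open (T @` P i), ({in P i &, injective T}), C1on (P i) T
         & exists g : V -> V, (forall x, P i x -> g (T x) = x) /\
                              C1on (T @` P i) g])
    &
      (0 < lam /\
      forall n (w : 'I_n -> I) x, cyl P T w x -> forall u : V,
         enorm (u *m invmx (jac (iter n T) x)) <= expR (- (lam * n%:R))  * enorm u)] /\
  [/\ 0 < alpha <= 1, (forall x, X x -> 0 < tau x),
          (forall x, X x -> differentiable tau x)
        & (exists CH : R, forall x y, X x -> X y -> forall v : V,
            `|'d tau x v - 'd tau y v| <= CH * (enorm (x - y)) `^ alpha * enorm v)] /\
      (forall i x, P i x -> forall u : V,
        `|'d tau x (u *m invmx (jac T x))| <= C3 * enorm u).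

End Defs.

(* Main.v *)
Require Import Defs.
From HB Require Import structures.
From mathcomp Require Import all_boot all_order all_algebra.
From mathcomp Require Import all_classical all_reals all_analysis.
From mathcomp Require Import ring lra zify.
Set Implicit Arguments. Unset Strict Implicit. Unset Printing Implicit Defensive.
Import Order.TTheory GRing.Theory Num.Theory.
Import numFieldNormedType.Exports.
Local Open Scope classical_set_scope.
Local Open Scope ring_scope.

Section Enorm.
Variables (R : realType) (d : nat).
Notation V := 'rV[R]_d.
Local Notation en := (@enorm R d).

Definition sq (u : V) := \sum_(i < d) u 0 i ^+ 2.
Definition dot (u v : V) := \sum_(i < d) u 0 i * v 0 i.

Lemma sq_ge0 u : 0 <= sq u.
Proof. by apply: sumr_ge0 => i _; exact: sqr_ge0. Qed.

Lemma enorm_ge0 u : 0 <= en u.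
Proof. exact: sqrtr_ge0. Qed.

Lemma enorm_sq u : en u ^+ 2 = sq u.
Proof. by rewrite sqr_sqrtr // sq_ge0. Qed.

Lemma sqZ k u : sq (k *: u) = k ^+ 2 * sq u.
Proof. by rewrite /sq mulr_sumr; apply: eq_bigr => i _; rewrite mxE exprMn. Qed.

Lemma enormZ k u : en (k *: u) = `|k| * en u.
Proof.
by rewrite /enorm -/(sq _) sqZ sqrtrM ?sqr_ge0 // sqrtr_sqr.
Qed.

Lemma enormN u : en (- u) = en u.
Proof. by rewrite -scaleN1r enormZ normrN normr1 mul1r. Qed.

Lemma enorm0 : en 0 = 0.
Proof. by rewrite -(scale0r 0) enormZ normr0 mul0r. Qed.

Lemma sqD u v : sq (u + v) = sq u + 2 * dot u v + sq v.
Proof.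
rewrite /sq /dot mulr_sumr -!big_split /=; apply: eq_bigr => i _.
by rewrite mxE; ring.
Qed.

Lemma cauchy_schwarz u v : dot u v ^+ 2 <= sq u * sq v.
Proof.
have [v0|vpos] := eqVneq (sq v) 0.
  have hv : forall i, v 0 i = 0.
    move=> i; apply/eqP; rewrite -sqrf_eq0; apply/eqP.
    move/eqP: v0; rewrite psumr_eq0 => [/allP H|j _]; last exact: sqr_ge0.
    by apply/eqP; apply: (H i); rewrite mem_index_enum.
  rewrite v0 mulr0 /dot big1 ?expr0n // => i _; by rewrite hv mulr0.
have c0 : 0 < sq v by rewrite lt0r vpos sq_ge0.
set t := dot u v / sq v.
have := sq_ge0 (u - t *: v).
rewrite -scaleNr sqD sqZ.
have -> : dot u (- t *: v) = - t * dot u v.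
  rewrite /dot mulr_sumr; apply: eq_bigr => i _; rewrite mxE; ring.
rewrite /t => H.
have : 0 <= sq u * sq v - dot u v ^+ 2.
  have := mulr_ge0 H (ltW c0).
  congr (_ <= _); field; exact: vpos.
by rewrite subr_ge0.
Qed.

Lemma enormD u v : en (u + v) <= en u + en v.
Proof.
rewrite -(ler_pXn2r (_ : 0 < 2)%N) ?nnegrE ?addr_ge0 ?enorm_ge0 //.
rewrite sqrrD !enorm_sq sqD lerD2r lerD2l.
have H2 : `|dot u v| <= en u * en v.
  rewrite -(ler_pXn2r (_ : 0 < 2)%N) ?nnegrE ?mulr_ge0 ?enorm_ge0 //.
  by rewrite exprMn !enorm_sq real_normK ?num_real // cauchy_schwarz.
have := ler_norm (dot u v).
move: H2; set a := dot u v; set b := en u * en v; rewrite mulr2n; lra.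
Qed.

Lemma enorm_gt0 u : u != 0 -> 0 < en u.
Proof.
move=> u0; rewrite lt0r enorm_ge0 andbT; apply/negP => /eqP e.
move: (enorm_sq u); rewrite e expr0n /= => /esym/eqP.
rewrite psumr_eq0 => [/allP H|j _]; last exact: sqr_ge0.
move/negP: u0; apply; apply/eqP/rowP => i; rewrite mxE.
by apply/eqP; rewrite -sqrf_eq0; apply: (H i); rewrite mem_index_enum.
Qed.

End Enorm.

Section Sandwich.
Variables (R : realType) (d : nat).
Notation V := 'rV[R]_d.

Definition psi (c : 'cV[R]_d) (u : V) : R := (u *m c) 0 0.

Lemma psiD c u v : psi c (u + v) = psi c u + psi c v.
Proof. by rewrite /psi mulmxDl mxE. Qed.
Lemma psiZ c a u : psi c (a *: u) = a * psi c u.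
Proof. by rewrite /psi -scalemxAl mxE. Qed.
Lemma psiN c u : psi c (- u) = - psi c u.
Proof. by rewrite -scaleN1r psiZ mulN1r. Qed.
Lemma psiB c u v : psi c (u - v) = psi c u - psi c v.
Proof. by rewrite psiD psiN. Qed.
Lemma psi0 c : psi c 0 = 0.
Proof. by rewrite /psi mul0mx mxE. Qed.

Definition Fk (k : nat) (u : V) := forall i : 'I_d, (k <= i)%N -> u 0 i = 0.

Variables (r1 r2 dl : V -> R).
Hypotheses (r1Z : forall a u, r1 (a *: u) = `|a| * r1 u)
  (r1D : forall u v, r1 (u + v) <= r1 u + r1 v)
  (r2Z : forall a u, r2 (a *: u) = `|a| * r2 u)
  (r2D : forall u v, r2 (u + v) <= r2 u + r2 v)
  (dlD : forall u v, dl (u + v) = dl u + dl v)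
  (dlZ : forall a u, dl (a *: u) = a * dl u)
  (hyp : forall u, `|dl u| <= r1 u + r2 u).

Lemma rN (r : V -> R) : (forall a u, r (a *: u) = `|a| * r u) ->
  forall u, r (- u) = r u.
Proof. by move=> rZ u; rewrite -scaleN1r rZ normrN normr1 mul1r. Qed.
Lemma r0 (r : V -> R) : (forall a u, r (a *: u) = `|a| * r u) -> r 0 = 0.
Proof. by move=> rZ; rewrite -(scale0r 0) rZ normr0 mul0r. Qed.
Lemma rP (r : V -> R) : (forall a u, r (a *: u) = `|a| * r u) ->
  forall a u, 0 < a -> r (a *: u) = a * r u.
Proof. by move=> rZ a u a0; rewrite rZ gtr0_norm. Qed.
Lemma dl0 : dl 0 = 0.
Proof. by rewrite -(scale0r 0) dlZ mul0r. Qed.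
Lemma dlN u : dl (- u) = - dl u.
Proof. by rewrite -scaleN1r dlZ mulN1r. Qed.

Definition Inv k c := forall u, Fk k u -> forall b,
  psi c u <= r1 (u - b) + dl b + r2 b.

Lemma Inv0 : Inv 0 0.
Proof.
move=> u Fu b; have -> : u = 0 by apply/rowP => i; rewrite Fu // mxE.
rewrite /psi mulmx0 mxE sub0r (rN r1Z).
have := hyp b; have := ler_norm (- dl b); rewrite normrN; lra.
Qed.

Lemma InvS k (kd : (k < d)%N) c : Inv k c -> exists c', Inv k.+1 c'.
Proof.
move=> inv.
pose kk := Ordinal kd.
pose e : V := delta_mx 0 kk.
pose S := [set q | exists v b, Fk k v /\ q = psi c v - r1 (v - e - b) - dl b - r2 b].
have ubS : forall w b', Fk k w -> ubound S (r1 (w + e - b') + dl b' + r2 b' - psi c w).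
  move=> w b' Fw q [v [b [Fv ->]]].
  have Fvw : Fk k (v + w) by move=> i ki; rewrite mxE Fv // Fw // addr0.
  have := inv _ Fvw (b + b').
  have := r1D (v - e - b) (w + e - b').
  have -> : v - e - b + (w + e - b') = v + w - (b + b').
    by apply/rowP => i; rewrite !mxE; ring.
  have := r2D b b'; rewrite psiD dlD; lra.
have S0 : S (psi c 0 - r1 (0 - e - 0) - dl 0 - r2 0).
  by exists 0, 0; split; [move=> i _; rewrite mxE|].
have F0 : Fk k 0 by move=> i _; rewrite mxE.
have hs : has_sup S.
  split; first by exists (psi c 0 - r1 (0 - e - 0) - dl 0 - r2 0).
  by exists (r1 (0 + e - 0) + dl 0 + r2 0 - psi c 0); apply: ubS.
pose t := sup S.
have ht1 : forall v b, Fk k v -> psi c v - r1 (v - e - b) - dl b - r2 b <= t.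
  by move=> v b Fv; apply: sup_upper_bound => //; exists v, b.
have ht2 : forall w b', Fk k w -> t <= r1 (w + e - b') + dl b' + r2 b' - psi c w.
  move=> w b' Fw; apply: ge_sup; last exact: ubS.
  by exists (psi c 0 - r1 (0 - e - 0) - dl 0 - r2 0).
exists (c + (t - c kk 0) *: delta_mx kk 0).
move=> u Fu b.
pose s := u 0 kk.
pose u' := u - s *: e.
have Fu' : Fk k u'.
  move=> i ki; rewrite !mxE /s.
  have [ik|ik] := eqVneq i kk.
    by rewrite ik eqxx mulr1 subrr.
  rewrite /= mulr0 subr0; apply: Fu.
  by rewrite ltn_neqAle ki andbT eq_sym; apply: contra ik => /eqP h; apply/eqP/val_inj.
have u'k : u' 0 kk = 0 by rewrite !mxE !eqxx /= mulr1 subrr.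
have ue : u = u' + s *: e by rewrite subrK.
have psie : psi c e = c kk 0.
  by rewrite /psi /e -rowE mxE.
have psiu : psi (c + (t - c kk 0) *: delta_mx kk 0) u = psi c u' + s * t.
  have -> : psi (c + (t - c kk 0) *: delta_mx kk 0) u = psi c u + (t - c kk 0) * s.
    by rewrite /psi mulmxDr -scalemxAr -colE [in LHS]mxE; congr (_ + _); rewrite !mxE.
  rewrite {1}ue psiD psiZ psie; ring.
rewrite psiu.
have [s0|sn0] := eqVneq s 0.
  by rewrite s0 mul0r addr0 {1}ue s0 scale0r addr0 inv.
have [sp|sn] := ltrP 0 s.
  have := ht2 (s^-1 *: u') (s^-1 *: b).
  have Fs : Fk k (s^-1 *: u') by move=> i ki; rewrite mxE Fu' // mulr0.
  move=> /(_ Fs).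
  have -> : s^-1 *: u' + e - s^-1 *: b = s^-1 *: (u - b).
    by rewrite ue; apply/rowP => i; rewrite !mxE; field.
  have sip : 0 < s^-1 by rewrite invr_gt0.
  rewrite (rP r1Z) // (rP r2Z) // dlZ psiZ => H.
  have := ler_wpM2l (ltW sp) H.
  have -> : s * (s^-1 * r1 (u - b) + s^-1 * dl b + s^-1 * r2 b - s^-1 * psi c u')
     = r1 (u - b) + dl b + r2 b - psi c u' by field.
  lra.
have sneg : s < 0 by rewrite lt_neqAle sn0 sn.
pose a := - s.
have ap : 0 < a by rewrite oppr_gt0.
have := ht1 (a^-1 *: u') (a^-1 *: b).
have Fs : Fk k (a^-1 *: u') by move=> i ki; rewrite mxE Fu' // mulr0.
move=> /(_ Fs).
have -> : a^-1 *: u' - e - a^-1 *: b = a^-1 *: (u - b).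
  by rewrite ue /a; apply/rowP => i; rewrite !mxE; field.
have aip : 0 < a^-1 by rewrite invr_gt0.
rewrite (rP r1Z) // (rP r2Z) // dlZ psiZ => H.
have := ler_wpM2l (ltW ap) H.
have -> : a * (a^-1 * psi c u' - a^-1 * r1 (u - b) - a^-1 * dl b - a^-1 * r2 b)
   = psi c u' - r1 (u - b) - dl b - r2 b by field; rewrite /a oppr_eq0.
rewrite /a; lra.
Qed.

Lemma sandwich : exists c : 'cV[R]_d, forall u,
  `|psi c u| <= r1 u /\ `|dl u - psi c u| <= r2 u.
Proof.
have : forall k, (k <= d)%N -> exists c, Inv k c.
  elim=> [|k IH] kd; first by exists 0; exact: Inv0.
  have [c hc] := IH (ltnW kd).
  exact: InvS hc.
move=> /(_ d (leqnn d)) [c hc]; exists c => u.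
have Fd : forall v, Fk d v by move=> v i; rewrite leqNgt ltn_ord.
have h1 : forall v, psi c v <= r1 v.
  by move=> v; have := hc v (Fd v) 0; rewrite subr0 dl0 (r0 r2Z) !addr0.
have h2 : forall v, psi c v <= dl v + r2 v.
  by move=> v; have := hc v (Fd v) v; rewrite subrr (r0 r1Z) add0r.
have := h1 (- u); have := h2 (- u); have := h1 u; have := h2 u.
rewrite psiN (rN r1Z) (rN r2Z) dlN.
move=> a1 a2 a3 a4; split; rewrite ler_norml; apply/andP; split; lra.
Qed.

End Sandwich.

Section NearDiff.
Variables (R : realType) (V W : normedModType R).

Lemma near0_diff (h : V -> W) (x : V) :
  (\forall z \near x, h z = 0) -> differentiable h x /\ 'd h x = 0 :> (V -> W).
Proof.
move=> h0.
have hx : h x = 0 by apply: (nbhs_singleton h0).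
have hsh : h \o shift x = cst (h x) + (\0 : {linear V -> W}) +o_ 0 id.
  apply/eqaddoP => eps eps0.
  move/nbhs0P: h0 => h0.
  near=> z; rewrite /= hx.
  rewrite !fctE /cst/=.
  have -> : h (z + x) = 0 by rewrite addrC; near: z.
  by rewrite addr0 subr0 normr0 mulr_ge0// ltW.
have dh : 'd h x = (\0 : {linear V -> W}) :> (V -> W).
  by apply: diff_unique => //; apply: (@cst_continuous _ _ (0 : W)).
split => //.
apply/diff_locallyP; rewrite dh; split=> //.
exact: (@cst_continuous _ _ (0 : W)).
Unshelve. all: by end_near. Qed.

Lemma near_eq_diff (f g : V -> W) (x : V) :
  differentiable f x -> (\forall z \near x, g z = f z) ->
  differentiable g x /\ 'd g x = 'd f x :> (V -> W).
Proof.
move=> df e.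
have e' : \forall z \near x, (g - f) z = 0.
  near=> z; rewrite !fctE; apply/eqP; rewrite subr_eq0; apply/eqP; near: z; exact: e.
have [dh dh0] := @near0_diff (g - f) x e'.
have -> : g = f + (g - f) by rewrite addrC subrK.
split; first exact: differentiableD.
rewrite diffD // dh0; apply/funext => v /=; exact: addr0.
Unshelve. all: by end_near. Qed.
End NearDiff.

Section Local.
Variables (R : realType) (d : nat).
Notation V := 'rV[R]_d.
Variables (T : V -> V) (I : finType) (P : I -> set V) (g : I -> V -> V).
Hypotheses (Tdiff : forall i x, P i x -> differentiable T x)
  (Tinj : forall i x x', P i x -> P i x' -> T x = T x' -> x = x')
  (gK : forall i x, P i x -> g i (T x) = x)
  (gdiff : forall i z, (T @` P i) z -> differentiable (g i) z)
  (Topen : forall i, open (T @` P i)).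
Variables (n : nat) (om : 'I_n -> I).

Lemma iter_diff x : cyl P T om x -> forall j, (j <= n)%N -> differentiable (iter j T) x.
Proof.
move=> cx; elim=> [|j IH] jn.
  by have [] := @is_diff_id R V x.
have -> : iter j.+1 T = T \o iter j T by apply/funext => z; rewrite iterS.
apply: differentiable_comp; first exact: IH (ltnW jn).
exact: (Tdiff (cx (Ordinal jn))).
Qed.

Lemma cyl_uniq p q : cyl P T om p -> cyl P T om q -> iter n T p = iter n T q -> p = q.
Proof.
move=> cp cq e.
suff : forall j, (j <= n)%N -> iter (n - j) T p = iter (n - j) T q.
  by move=> /(_ n (leqnn n)); rewrite subnn.
elim=> [|j IH] jn; first by rewrite subn0.
have kn : (n - j.+1 < n)%N by lia.
have e1 : (n - j = (n - j.+1).+1)%N by lia.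
move: (IH (ltnW jn)); rewrite e1 !iterS => e2.
exact: (Tinj (cp (Ordinal kn)) (cq (Ordinal kn)) e2).
Qed.

Definition gg (j : nat) : V -> V :=
  match insub j with Some o => g (om o) | None => id end.

Lemma ggE (o : 'I_n) : gg o = g (om o).
Proof.
rewrite /gg; case: insubP; last by rewrite ltn_ord.
move=> o2 H2 e.
by congr (g (om _)); apply: val_inj.
Qed.

Fixpoint Hc (m : nat) (z : V) : V :=
  match m with 0 => z | m'.+1 => gg (n - m) (Hc m' z) end.

Variables (l : V -> V).
Hypothesis hl : forall y, (iter n T @` cyl P T om) y ->
  cyl P T om (l y) /\ iter n T (l y) = y.
Variable y : V.
Hypothesis hy : (iter n T @` cyl P T om) y.

Lemma HcA m : (m <= n)%N -> Hc m y = iter (n - m) T (l y) /\ differentiable (Hc m) y.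
Proof.
have [cx ex] := hl hy.
elim: m => [|m IH] mn.
  split; first by rewrite subn0 ex.
  by have [] := @is_diff_id R V y.
have [e1 d1] := IH (ltnW mn).
have jn : (n - m.+1 < n)%N by lia.
pose o := Ordinal jn.
have Px : P (om o) (iter (n - m.+1) T (l y)) := cx o.
have eT : iter (n - m) T (l y) = T (iter (n - m.+1) T (l y)).
  by rewrite -iterS subnSK.
have -> : Hc m.+1 = gg (n - m.+1) \o Hc m by [].
have -> : gg (n - m.+1) = g (om o) by rewrite -(ggE o).
split; first by rewrite /= e1 eT gK.
apply: differentiable_comp => //.
apply: gdiff; rewrite e1 eT; by exists (iter (n - m.+1) T (l y)).
Qed.

Definition Good m z := forall o : 'I_n, val o = (n - m.+1)%N -> (T @` P (om o)) (Hc m z).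

Lemma good_near N : (N <= n)%N -> \forall z \near y, forall m, (m < N)%N -> Good m z.
Proof.
have [cx ex] := hl hy.
elim: N => [|N IH] Nn.
  by near=> z => m; rewrite ltn0.
have mn : (N < n)%N by [].
have jn : (n - N.+1 < n)%N by lia.
pose o := Ordinal jn.
have [e1 d1] := HcA (ltnW mn).
have cont := differentiable_continuous d1.
have nb : nbhs (Hc N y) (T @` P (om o)).
  apply: open_nbhs_nbhs; split; first exact: Topen.
  rewrite e1; exists (iter (n - N.+1) T (l y)); first exact: cx o.
  by rewrite -iterS subnSK.
have := cont _ nb.
move: (IH (ltnW Nn)) => IH' nb'.
near=> z => m; rewrite ltnS leq_eqVlt => /orP [/eqP ->|mN]; last first.
  by apply: (near IH' z).
move=> o' eo'.
have -> : o' = o by apply: val_inj.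
by near: z; exact: nb'.
Unshelve. all: by end_near. Qed.

Lemma good_eq z : (forall m, (m < n)%N -> Good m z) -> l z = Hc n z /\ iter n T (l z) = z.
Proof.
move=> G.
have C1 : forall m, (m < n)%N -> forall o : 'I_n, val o = (n - m.+1)%N ->
    T (Hc m.+1 z) = Hc m z /\ P (om o) (Hc m.+1 z).
  move=> m mn o eo.
  have [w Pw e] := G m mn o eo.
  have -> : Hc m.+1 z = gg (n - m.+1) (Hc m z) by [].
  by rewrite -eo ggE -e gK.
have C2 : forall j, (j <= n)%N -> iter j T (Hc n z) = Hc (n - j) z.
  elim=> [|j IH] jn; first by rewrite subn0.
  rewrite iterS IH ?(ltnW jn) //.
  have kn : (n - j.+1 < n)%N by lia.
  have -> : (n - j = (n - j.+1).+1)%N by lia.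
  have e : (n - (n - j.+1).+1 < n)%N by lia.
  by have [-> _] := C1 _ kn (Ordinal e) erefl.
have C3 : cyl P T om (Hc n z).
  move=> o; rewrite C2 ?(ltnW (ltn_ord o)) //.
  have oo := ltn_ord o.
  have kn : (n - o.+1 < n)%N by lia.
  have -> : (n - o = (n - o.+1).+1)%N by lia.
  have eo : nat_of_ord o = (n - (n - o.+1).+1)%N by lia.
  by have [_ H] := C1 _ kn o eo.
have im : (iter n T @` cyl P T om) z.
  by exists (Hc n z) => //; rewrite C2 // subnn.
have [cl el] := hl im.
split => //.
apply: cyl_uniq => //; by rewrite el C2 // subnn.
Qed.

Lemma l_near : \forall z \near y, l z = Hc n z /\ iter n T (l z) = z.
Proof.
have := good_near (leqnn n).
by apply: filterS => z; exact: good_eq.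
Qed.

Variable tau : V -> R.
Hypothesis taudiff : forall i x, P i x -> differentiable tau x.

Lemma birk_diff x : cyl P T om x -> differentiable (birk T tau n) x.
Proof.
move=> cx.
have -> : birk T tau n = \sum_(j < n) (tau \o iter j T).
  by rewrite fct_sumE; apply/funext => z.
apply: differentiable_sum => j.
apply: differentiable_comp; first exact: iter_diff cx _ (ltnW (ltn_ord j)).
exact: taudiff (cx j).
Qed.

Lemma local_facts :
  [/\ differentiable l y, differentiable (birk T tau n) (l y),
      (forall u, 'd (iter n T) (l y) ('d l y u) = u) &
      (forall u, 'd (birk T tau n \o l) y u = 'd (birk T tau n) (l y) ('d l y u))].
Proof.
have [cx ex] := hl hy.
have [_ dH] := HcA (leqnn n).
have ln1 : \forall z \near y, l z = Hc n z by apply: filterS l_near => z [].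
have [dl _] := @near_eq_diff R V V (Hc n) l y dH ln1.
have dT := iter_diff cx (leqnn n).
have dB := birk_diff cx.
have [did1 did2] := @is_diff_id R V y.
have ln2 : \forall z \near y, (iter n T \o l) z = id z by apply: filterS l_near => z [].
have [_ e] := @near_eq_diff R V V id (iter n T \o l) y did1 ln2.
have e2 := @diff_comp R V V V l (iter n T) y dl dT.
have e3 := @diff_comp R V V R^o l (birk T tau n) y dl dB.
split; [exact: dl | exact: dB | |].
  move=> u.
  have := congr1 (fun f => f u) (etrans (esym e2) (etrans e did2)).
  by [].
move=> u.
exact: (congr1 (fun f => f u) e3).
Qed.

End Local.

Section Alg.
Variables (R : realType) (d : nat).
Notation V := 'rV[R]_d.

Lemma alg (C5 : R) (M1 M2 A1 A2 : {linear V -> V}) (B1 B2 G1 G2 : {linear V -> R}) :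
 (forall u, A1 (M1 u) = u) -> (forall u, A2 (M2 u) = u) ->
 (forall u, G1 u = B1 (M1 u)) -> (forall u, G2 u = B2 (M2 u)) ->
 ~ (exists L : {vspace V}, (\dim L = 1)%N /\ forall v, v \in L -> v != 0 ->
     `|G1 v - G2 v| > C5 * (enorm (M1 v) + enorm (M2 v))) ->
 exists S : {vspace 'rV[R]_(d + 1)}, (\dim S = d)%N /\ forall w, w \in S ->
   (exists2 p, cone C5 p & row_mx (A1 (lsubmx p)) ((B1 (lsubmx p) + rsubmx p 0 0)%:M) = w) /\
   (exists2 p, cone C5 p & row_mx (A2 (lsubmx p)) ((B2 (lsubmx p) + rsubmx p 0 0)%:M) = w).
Proof.
move=> inv1 inv2 ch1 ch2 nL.
have key : forall u, `|G1 u - G2 u| <= C5 * (enorm (M1 u) + enorm (M2 u)).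
  move=> u; have [->|u0] := eqVneq u 0.
    by rewrite (linear0 G1) (linear0 G2) (linear0 M1) (linear0 M2) subrr normr0 enorm0 addr0 mulr0.
  rewrite leNgt; apply/negP => hlt; apply: nL; exists <[u]>%VS; split.
    by rewrite dim_vline u0.
  move=> v /vlineP [k ->] v0.
  have k0 : k != 0 by apply: contraNneq v0 => ->; rewrite scale0r.
  rewrite (linearZZ G1) (linearZZ G2) (linearZZ M1) (linearZZ M2).
  rewrite -[k *: G1 u]/(k * G1 u) -[k *: G2 u]/(k * G2 u) !enormZ -mulrBr normrM -mulrDr mulrCA.
  by rewrite ltr_pM2l // normr_gt0.
have Mne0 : forall (M A : {linear V -> V}) w,
    (forall u, A (M u) = u) -> w != 0 -> 0 < enorm (M w).
  move=> M A w inv w0; apply: enorm_gt0; apply: contraNneq w0 => Mw.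
  by rewrite -(inv w) Mw (linear0 A).
have all0 : C5 < 0 -> forall w : V, w = 0.
  move=> C5n w; apply/eqP; apply: contraT => w0.
  have p1 := Mne0 _ _ w inv1 w0.
  have p2 := enorm_ge0 (M2 w).
  have := key w; have := normr_ge0 (G1 w - G2 w).
  move: p1 p2; set a := `|_|; set e1 := enorm _; set e2 := enorm _ => p1 p2 ha hk.
  have : C5 * (e1 + e2) < 0 by rewrite pmulr_llt0 // ltr_wpDr.
  lra.
have rD : forall (M : {linear V -> V}) u v,
    C5 * enorm (M (u + v)) <= C5 * enorm (M u) + C5 * enorm (M v).
  move=> M u v; case: (leP 0 C5) => C5s.
    by rewrite linearD -mulrDr; apply: ler_wpM2l => //; exact: enormD.
  by rewrite (all0 C5s u) (all0 C5s v) addr0 linear0 enorm0 mulr0 addr0.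
have rZ : forall (M : {linear V -> V}) a u,
    C5 * enorm (M (a *: u)) = `|a| * (C5 * enorm (M u)).
  by move=> M a u; rewrite linearZZ enormZ mulrCA.
have dD : forall u v, G2 (u + v) - G1 (u + v) = (G2 u - G1 u) + (G2 v - G1 v).
  by move=> u v; rewrite (linearD G1) (linearD G2); ring.
have dZ : forall a u, G2 (a *: u) - G1 (a *: u) = a * (G2 u - G1 u).
  by move=> a u; rewrite (linearZZ G1) (linearZZ G2) /=; rewrite /GRing.scale /=; ring.
have hyp : forall u, `|G2 u - G1 u| <= C5 * enorm (M1 u) + C5 * enorm (M2 u).
  by move=> u; rewrite distrC -mulrDr; apply: key.
have [c hc] := @sandwich R d (fun u => C5 * enorm (M1 u)) (fun u => C5 * enorm (M2 u))
   (fun u => G2 u - G1 u) (rZ M1) (rD M1) (rZ M2) (rD M2) dD dZ hyp.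
pose ph u := G1 u + psi c u.
pose Phi : 'cV[R]_d := \col_i G1 (delta_mx 0 i) + c.
have G1E : forall u, G1 u = \sum_j u 0 j * G1 (delta_mx 0 j).
  move=> u; rewrite {1}(row_sum_delta u) linear_sum; apply: eq_bigr => j _.
  by rewrite linearZZ.
have PhiE : forall u, (u *m Phi) 0 0 = ph u.
  move=> u; rewrite mulmxDr mxE -/(psi c u) /ph G1E; congr (_ + _).
  rewrite mxE; apply: eq_bigr => j _; by rewrite mxE.
have PhiM : forall u, u *m Phi = (ph u)%:M by move=> u; rewrite [LHS]mx11_scalar PhiE.
pose B := row_mx 1%:M Phi.
pose f : 'Hom(V, 'rV[R]_(d + 1)) := linfun (mulmxr B).
have fE : forall u, f u = row_mx u (u *m Phi).
  by move=> u; rewrite lfunE /= mul_mx_row mulmx1.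
exists (limg f); split.
  rewrite limg_dim_eq; first by rewrite dimvf /dim /= mul1n.
  rewrite capfv; apply/eqP/lker0P => u v; rewrite !fE.
  by move=> /eq_row_mx [].
move=> w /memv_imgP [u _ ->]; rewrite fE PhiM.
split.
  exists (row_mx (M1 u) ((psi c u)%:M)).
    rewrite /cone /= row_mxKl row_mxKr mxE eqxx mulr1n.
    by have [] := hc u.
  rewrite row_mxKl row_mxKr mxE eqxx mulr1n inv1 -ch1.
  by [].
exists (row_mx (M2 u) ((ph u - G2 u)%:M)).
  rewrite /cone /= row_mxKl row_mxKr mxE eqxx mulr1n.
  have [_ h2] := hc u.
  by rewrite distrC /ph opprD addrA.
rewrite row_mxKl row_mxKr mxE eqxx mulr1n inv2 -ch2.
by rewrite addrC subrK.
Qed.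
End Alg.

Theorem lemma3p7 (R : realType) (d : nat) (X : set 'rV[R]_d)
  (T : 'rV[R]_d -> 'rV[R]_d) (tau : 'rV[R]_d -> R) (lam alpha C3 : R)
  (I : finType) (P : I -> set 'rV[R]_d) :
  setting X T tau lam alpha C3 P ->
  let C5 := 2 * C3 / (1 - expR (- lam)) in
  forall (n : nat) (om up : 'I_n -> I) (l_om l_up : 'rV[R]_d -> 'rV[R]_d),
  (* l_om = (T^n restricted to omega)^{-1} on T^n omega, likewise l_up *)
  (forall y, (iter n T @` cyl P T om) y ->
     cyl P T om (l_om y) /\ iter n T (l_om y) = y) ->
  (forall y, (iter n T @` cyl P T up) y ->
     cyl P T up (l_up y) /\ iter n T (l_up y) = y) ->
  forall y : 'rV[R]_d,
  (iter n T @` cyl P T om) y -> (iter n T @` cyl P T up) y ->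
  transverse T tau n C5 (l_om y) (l_up y) ->
  exists L : {vspace 'rV[R]_d}, (\dim L = 1)%N /\
    forall v, v \in L -> v != 0 ->
      `|'d (birk T tau n \o l_om) y v - 'd (birk T tau n \o l_up) y v|
        > C5 * (enorm ('d l_om y v) + enorm ('d l_up y v)).
Proof.
move=> Hset C5 n om up l1 l2 hl1 hl2 y hy1 hy2 Htr.
case: Hset => [[_ [Pprop _ _] Tprop [lam0 _]] [[_ _ taudiff0 _] C3b]].
have Tdiff : forall i x, P i x -> differentiable T x.
  by move=> i x Px; have [_ _ [dT _] _] := Tprop i; exact: dT.
have Tinj : forall i x x', P i x -> P i x' -> T x = T x' -> x = x'.
  move=> i x x' Px Px' e; have [_ inj _ _] := Tprop i.
  by apply: inj => //; rewrite in_setE.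
have Topen : forall i, open (T @` P i) by move=> i; have [] := Tprop i.
have : forall i, exists g : 'rV[R]_d -> 'rV[R]_d,
    (forall x, P i x -> g (T x) = x) /\ C1on (T @` P i) g.
  by move=> i; have [_ _ _ [g hg]] := Tprop i; exists g.
move=> /choice [g hg].
have gK : forall i x, P i x -> g i (T x) = x by move=> i; have [] := hg i.
have gdiff : forall i z, (T @` P i) z -> differentiable (g i) z.
  by move=> i z hz; have [_ [dg _]] := hg i; exact: dg.
have taudiff : forall i x, P i x -> differentiable tau x.
  by move=> i x Px; apply: taudiff0; have [_ [_ sub]] := Pprop i; exact: sub.
have [dl1 dB1 inv1 ch1] := local_facts Tdiff Tinj gK gdiff Topen hl1 hy1 taudiff.
have [dl2 dB2 inv2 ch2] := local_facts Tdiff Tinj gK gdiff Topen hl2 hy2 taudiff.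
case: (pselect (exists L : {vspace 'rV[R]_d}, (\dim L = 1)%N /\
    forall v, v \in L -> v != 0 ->
      `|'d (birk T tau n \o l1) y v - 'd (birk T tau n \o l2) y v|
        > C5 * (enorm ('d l1 y v) + enorm ('d l2 y v)))) => [H|nL].
  exact: H.
exfalso; apply: Htr.
exact: (alg inv1 inv2 ch1 ch2 nL).
Qed.
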